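(* Let $\mathcal A=\{G\in\mathcal G:\ \overline G\text{ is Abelian}\}$ (a closed subspace of $\mathcal G$) and let $A\in\mathcal G$ be such that $\overline A\cong\bigoplus_{p\in\mathbf P}\mathbb Z[p^\infty]^{(\mathbb N)}$. Then the isomorphism class $\mathcal I_{\overline A}=\{G\in\mathcal G:\ \overline G\cong\overline A\}$ is comeager in $\mathcal A$.
   Context: Let $\mathbb N=\{1,2,3,\dots\}$. Equip $\mathbb N^{\mathbb N\times\mathbb N}$ with the product topology of the discrete topology on $\mathbb N$. Let $\mathcal G$ be the subspace consisting of those $A\in\mathbb N^{\mathbb N\times\mathbb N}$ that are the multiplication table of a group on the underlying set $\mathbb N$ whose identity element is $1$. For $G\in\mathcal G$, $\overline G$ denotes the group on $\mathbb N$ with multiplication table $G$. $\mathbf P$ is the set of primes, $\mathbb Z[p^\infty]$ is the Prüfer $p$-group, and $K^{(\mathbb N)}$ denotes the direct sum of countably infinitely many copies of $K$. ($\overline A$ is the unique countable divisible Abelian torsion group into which every finite Abelian group embeds.) *)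

(* Defs.v *)
From mathcomp Require Import all_boot all_order all_algebra.
Set Implicit Arguments. Unset Strict Implicit. Unset Printing Implicit Defensive.
Import Order.TTheory GRing.Theory Num.Theory.

(* Convention: the paper's underlying set N = {1,2,3,...} is represented by
   Rocq's nat = {0,1,2,...} via n |-> n+1; hence the paper's identity 1 is 0 here.
   This relabelling is a homeomorphism of N^(N x N) preserving everything. *)

Definition table := nat -> nat -> nat.

Definition is_group_table (M : table) : Prop :=
  (forall x y z, M (M x y) z = M x (M y z)) /\
  (forall x, M 0 x = x /\ M x 0 = x) /\
  (forall x, exists y, M x y = 0 /\ M y x = 0).

Definition abelian_tables (M : table) : Prop :=
  is_group_table M /\ forall x y, M x y = M y x.

Definition iso_tables (M M' : table) : Prop :=
  exists f : nat -> nat, bijective f /\ forall x y, f (M x y) = M' (f x) (f y).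

(* The group  (+)_{p prime} Z[p^oo]^(N), concretely: finitely supported
   families h : nat (prime index p) -> nat (copy index i) -> rat, where
   h p i lies in Z[p^oo] = {a / p^k + Z} represented by rationals in [0,1)
   whose reduced denominator is a power of p; h p i = 0 if p is not prime.
   The group law is pointwise addition mod 1. *)
Definition prufer_sum_elt (h : nat -> nat -> rat) : Prop :=
  (forall p i, 0 <= h p i < 1)%R /\
  (forall p i, ~~ prime p -> h p i = 0%R) /\
  (forall p i, prime p -> exists k : nat, denq (h p i) = (p ^ k)%:Z%R) /\
  (exists N, forall p i, (N <= p)%N \/ (N <= i)%N -> h p i = 0%R).

Definition add_mod1 (a b : rat) : rat :=
  (if 1 <= a + b then a + b - 1 else a + b)%R.

Definition prufer_sum_add (h h' : nat -> nat -> rat) : nat -> nat -> rat :=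
  fun p i => add_mod1 (h p i) (h' p i).

Definition iso_to_prufer_sum (M : table) : Prop :=
  exists f : nat -> (nat -> nat -> rat),
    (forall x y, f x = f y -> x = y) /\
    (forall h, prufer_sum_elt h <-> exists x, f x = h) /\
    (forall x y, f (M x y) = prufer_sum_add (f x) (f y)).

(* Topology of N^(N x N) (product of discrete): the sets
   {M' | agree n M M'} form a neighbourhood base at M. *)
Definition agree (n : nat) (M M' : table) : Prop :=
  forall x y, (x < n)%N -> (y < n)%N -> M x y = M' x y.

Definition openIn (S U : table -> Prop) : Prop :=
  (forall M, U M -> S M) /\
  (forall M, U M -> exists n, forall M', S M' -> agree n M M' -> U M').

Definition denseIn (S U : table -> Prop) : Prop :=
  forall M n, S M -> exists M', S M' /\ U M' /\ agree n M M'.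

Definition comeagerIn (S C : table -> Prop) : Prop :=
  exists U : nat -> (table -> Prop),
    (forall k, openIn S (U k) /\ denseIn S (U k)) /\
    (forall M, S M -> (forall k, U k M) -> C M).

(* Main.v *)
From HB Require Import structures.
Require Import Defs.
From mathcomp Require Import all_boot all_order all_algebra.
From Stdlib Require Import Classical ClassicalEpsilon FunctionalExtensionality.
From mathcomp Require Import zify.
Set Implicit Arguments. Unset Strict Implicit. Unset Printing Implicit Defensive.
Import Order.TTheory GRing.Theory Num.Theory.
Local Open Scope ring_scope.

Local Open Scope ring_scope.

Lemma min_ex (P : nat -> Prop) : (exists n, P n) ->
  exists n, P n /\ forall m, (m < n)%N -> ~ P m.
Proof.
case=> n; elim/ltn_ind: n => n IH Pn.
case: (classic (exists m, (m < n)%N /\ P m)) => [[m [lt Pm]]|H].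
  exact: IH Pm.
exists n; split=> // m lt Pm; apply: H; by exists m.
Qed.

Section Lin.
Variable V : zmodType.
Definition lc (s : seq V) (c : nat -> int) : V := \sum_(i < size s) s`_i *~ c i.
Definition inspan s (x : V) := exists c, lc s c = x.

Lemma lc_rcons s x c : lc (rcons s x) c = lc s c + x *~ c (size s).
Proof.
rewrite /lc size_rcons big_ord_recr /= nth_rcons ltnn eqxx; congr (_ + _).
apply: eq_bigr => i _; by rewrite nth_rcons ltn_ord.
Qed.

Lemma lc_ext s c1 c2 : (forall i, (i < size s)%N -> c1 i = c2 i) -> lc s c1 = lc s c2.
Proof. move=> H; apply: eq_bigr => i _; by rewrite H. Qed.

Lemma lc0 s : lc s (fun _ => 0) = 0.
Proof. rewrite /lc big1 // => i _; exact: mulrz0. Qed.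

Lemma lcD s c1 c2 : lc s (fun i => c1 i + c2 i) = lc s c1 + lc s c2.
Proof. rewrite /lc -big_split /=; apply: eq_bigr => i _; exact: mulrzDr. Qed.

Lemma lcN s c : lc s (fun i => - c i) = - lc s c.
Proof. rewrite /lc -sumrN; apply: eq_bigr => i _; exact: mulrNz. Qed.

Lemma lcZ s c k : lc s (fun i => c i * k) = lc s c *~ k.
Proof. rewrite /lc mulrz_suml; apply: eq_bigr => i _; by rewrite mulrzA. Qed.

Lemma lc_delta s i : (i < size s)%N -> lc s (fun j => (j == i)%:Z) = s`_i.
Proof.
move=> H; rewrite /lc (bigD1 (Ordinal H)) //= eqxx mulr1z big1 ?addr0 // => j ne.
rewrite (_ : (j == i :> nat) = false) ?mulr0z //; apply/negbTE.
by apply: contra ne => /eqP e; apply/eqP/val_inj.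
Qed.

Lemma inspan0 s : inspan s 0. Proof. exists (fun _ => 0); exact: lc0. Qed.
Lemma inspanD s x y : inspan s x -> inspan s y -> inspan s (x + y).
Proof. by move=> [c1 <-] [c2 <-]; exists (fun i => c1 i + c2 i); rewrite lcD. Qed.
Lemma inspanN s x : inspan s x -> inspan s (- x).
Proof. by move=> [c1 <-]; exists (fun i => - c1 i); rewrite lcN. Qed.
Lemma inspanZ s x k : inspan s x -> inspan s (x *~ k).
Proof. by move=> [c1 <-]; exists (fun i => c1 i * k); rewrite lcZ. Qed.

Lemma inspan_abs s x j : inspan s (x *~ j) -> inspan s (x *+ `|j|%N).
Proof.
move=> H; change (inspan s (x *~ (`|j|%N : int))); have [jge|jlt] := lerP 0 j.
  by rewrite gez0_abs.
by rewrite ltz0_abs // mulrNz; apply: inspanN.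
Qed.

Definition Tor := forall x : V, exists m, (0 < m)%N /\ x *+ m = 0.
Definition DivP := forall (x : V) p, prime p -> exists y, y *+ p = x.
Definition Soc := forall p, prime p -> forall s : seq V, exists z, z *+ p = 0 /\ z \notin s.

Lemma DivAll : DivP -> forall (y : V) m, (0 < m)%N -> exists z, z *+ m = y.
Proof.
move=> D y m; elim/ltn_ind: m y => m IH y m0.
case: (ltngtP m 1) => [|lt1|->]; first by rewrite ltnS leqn0 => /eqP e; move: m0; rewrite e.
  have pp := pdiv_prime lt1.
  have q0 : (0 < m %/ pdiv m)%N by rewrite divn_gt0 ?pdiv_gt0 // dvdn_leq // pdiv_dvd.
  have [y' ey'] := IH _ (ltn_Pdiv (prime_gt1 pp) m0) y q0.
  have [z ez] := D y' _ pp.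
  exists z; rewrite -(divnK (pdiv_dvd m)) mulnC mulrnA ez //.
by exists y.
Qed.
End Lin.

Local Open Scope ring_scope.

Section Ext.
Variables G H : zmodType.
Definition good1 (s : seq G) (t : seq H) :=
  size s = size t /\ forall c, lc s c = 0 -> lc t c = 0.

Lemma min_div (s : seq G) g m c0 j :
  (0 < m)%N -> lc s c0 = g *+ m ->
  (forall m', (m' < m)%N -> ~ ((0 < m')%N /\ inspan s (g *+ m'))) ->
  inspan s (g *~ j) -> j = (j %/ m)%Z * m%:Z.
Proof.
move=> m0 e0 mn sj.
have mz : m%:Z != 0 by rewrite eqz_nat -lt0n.
have ej := divz_eq j m%:Z.
set q := (j %/ m)%Z in ej *; set r := (j %% m)%Z in ej *.
have rge : 0 <= r := modz_ge0 j mz.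
have rlt : r < m%:Z by apply: ltz_pmod; rewrite ltz_nat.
suff r0 : r = 0 by rewrite ej r0 addr0.
have sr : inspan s (g *~ r).
  have E : (g *+ m) *~ q = g *~ (q * m%:Z) by rewrite -mulrzA_C.
  have -> : g *~ r = g *~ j - (g *+ m) *~ q.
    by rewrite E; apply/eqP; rewrite eq_sym subr_eq -mulrzDr [r + _]addrC -ej.
  by apply: inspanD => //; apply/inspanN/inspanZ; exists c0.
have := inspan_abs sr; rewrite -(gez0_abs rge) ltz_nat in rlt *.
case: (posnP `|r|%N) => [e|pos] srr.
  by move/eqP: e; rewrite absz_eq0 => /eqP->.
by have [] := mn _ rlt.
Qed.

Lemma ext1 (DH : DivP H) s t (g : G) : good1 s t ->
  exists h : H, good1 (rcons s g) (rcons t h).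
Proof.
move=> [sz gd].
case: (classic (exists m, (0 < m)%N /\ inspan s (g *+ m))) => [ex|nex].
- have [m [[m0 [c0 e0]] mn]] := min_ex ex.
  have [h eh] := DivAll DH (lc t c0) m0.
  exists h; split; first by rewrite !size_rcons sz.
  move=> c; rewrite !lc_rcons => e.
  have sj : inspan s (g *~ c (size s)).
    exists (fun i => - c i); rewrite lcN; apply/eqP; by rewrite eq_sym -subr_eq0 opprK addrC e.
  have ej := min_div m0 e0 mn sj.
  set q := (_ %/ _)%Z in ej.
  have e2 : lc s (fun i => c i + c0 i * q) = 0.
    by rewrite lcD lcZ e0; change (g *+ m) with (g *~ m%:Z); rewrite mulrzA_C -ej.
  have := gd _ e2; rewrite lcD lcZ -eh -sz; change (h *+ m) with (h *~ m%:Z).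
  by rewrite mulrzA_C -ej.
- exists 0; split; first by rewrite !size_rcons sz.
  move=> c; rewrite !lc_rcons mul0rz addr0 => e.
  have sj : inspan s (g *~ c (size s)).
    exists (fun i => - c i); rewrite lcN; apply/eqP; by rewrite eq_sym -subr_eq0 opprK addrC e.
  have := inspan_abs sj; case: (posnP `|c (size s)|%N) => [e'|pos] srr.
    move/eqP: e'; rewrite absz_eq0 => /eqP e'; move: e; rewrite e'; rewrite mulr0z addr0; exact: gd.
  by case: nex; exists `|c (size s)|%N.
Qed.
End Ext.

Local Open Scope ring_scope.

Section Key.
Variable V : zmodType.
Lemma coprime_span (s : seq V) x p r : inspan s (x *+ p) -> inspan s (x *+ r) ->
  coprime r p -> inspan s x.
Proof.
move=> sp sr cop.
have [u [v e]] := Bezoutz r p.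
have g1 : gcdz r p = 1 by rewrite /gcdz /= (eqP cop).
have -> : x = (x *+ r) *~ u + (x *+ p) *~ v.
  change (x = (x *~ r) *~ u + (x *~ p) *~ v).
  by rewrite !mulrzA_C -mulrzDr e g1 mulr1z.
by apply: inspanD; apply: inspanZ.
Qed.

Lemma key (s : seq V) x p c0 : prime p -> ~ inspan s x -> lc s c0 = x *+ p ->
  forall c j, lc s c + x *~ j = 0 <->
   (exists q, j = q * p%:Z /\ lc s (fun i => c i + c0 i * q) = 0).
Proof.
move=> pp nx e0 c j; split.
- move=> e.
  have sj : inspan s (x *~ j).
    exists (fun i => - c i); rewrite lcN; apply/eqP; by rewrite eq_sym -subr_eq0 opprK addrC e.
  have mn : forall m', (m' < p)%N -> ~ ((0 < m')%N /\ inspan s (x *+ m')).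
    move=> m' lt [m0 sm]; apply: nx; apply: (coprime_span (p := p) (r := m')) => //.
      by exists c0.
    rewrite coprime_sym prime_coprime //; apply/negP => /(dvdn_leq m0); by rewrite leqNgt lt.
  have ej := min_div (prime_gt0 pp) e0 mn sj.
  exists (j %/ p)%Z; split => //.
  rewrite lcD lcZ e0; change (x *+ p) with (x *~ p%:Z); by rewrite mulrzA_C -ej.
- move=> [q [-> e]]; move: e; rewrite lcD lcZ e0; change (x *+ p) with (x *~ p%:Z).
  by rewrite mulrzA_C.
Qed.

Lemma span_fin (TV : Tor V) t : exists L : seq V, forall y, inspan t y -> y \in L.
Proof.
elim/last_ind: t => [|t a [L HL]].
  exists [:: 0] => y [c <-]; by rewrite /lc big_ord0 inE.
have [o [o0 ao]] := TV a.
exists [seq u + a *+ i | u <- L, i <- iota 0 o] => y [c <-]; rewrite lc_rcons.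
have ej := divz_eq (c (size t)) o%:Z.
have oz : o%:Z != 0 by rewrite eqz_nat -lt0n.
have rge := modz_ge0 (c (size t)) oz.
have rlt : (c (size t) %% o)%Z < o%:Z by apply: ltz_pmod; rewrite ltz_nat.
have -> : a *~ c (size t) = a *+ `|(c (size t) %% o)%Z|%N.
  rewrite {1}ej mulrzDr -mulrzA_C; change (a *~ o) with (a *+ o); rewrite ao mul0rz add0r.
  change (a *~ (c (size t) %% o)%Z = a *~ `|(c (size t) %% o)%Z|%N); by rewrite gez0_abs.
apply: allpairs_f; first by apply: HL; exists c.
rewrite mem_iota add0n; by rewrite -(gez0_abs rge) ltz_nat in rlt.
Qed.
End Key.

Section Ext2.
Variables G H : zmodType.
Definition good (s : seq G) (t : seq H) :=
  size s = size t /\ forall c, lc s c = 0 <-> lc t c = 0.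

Lemma good_drop s t a b a' b' : good (rcons (rcons s a) b) (rcons (rcons t a') b') ->
  good (rcons s b) (rcons t b').
Proof.
rewrite /good !size_rcons => [[[sz] gd]]; split; first by rewrite sz.
move=> c.
pose c' i := if (i < size s)%N then c i else if i == size s then 0 else c (size s).
have E (W : zmodType) (u : seq W) x y : size u = size s ->
    lc (rcons (rcons u x) y) c' = lc (rcons u y) c.
  move=> su; rewrite !lc_rcons size_rcons su /c' ltnn eqxx mulr0z addr0 ltnNge leqnSn /=.
  rewrite (_ : (size s).+1 == size s = false); last by elim: (size s) => // n IH.
  congr (_ + _); apply: lc_ext => i; rewrite su => ->; done.
by rewrite -(E _ s a b) // -(E _ t a' b') // gd.
Qed.

Hypotheses (TG : Tor G) (TH : Tor H) (DH : DivP H) (SH : Soc H).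

Lemma ext2_aux m : forall s t (g : G), good s t -> (0 < m)%N -> inspan s (g *+ m) ->
  exists h, good (rcons s g) (rcons t h).
Proof.
elim/ltn_ind: m => m IH s t g [sz gd] m0 sm.
have [m1 [[m10 [c0 e0]] mn]] := min_ex (ex_intro (fun k => (0 < k)%N /\ inspan s (g *+ k)) m (conj m0 sm)).
have m1m : (m1 <= m)%N by rewrite leqNgt; apply/negP => lt; exact: mn _ lt (conj m0 sm).
case: (ltngtP m1 1) => [|lt1|e1]; first by rewrite ltnS leqn0 => /eqP e; move: m10; rewrite e.
-
  set p := pdiv m1; have pp : prime p := pdiv_prime lt1.
  set m' := (m1 %/ p)%N.
  have m'0 : (0 < m')%N by rewrite divn_gt0 ?pdiv_gt0 // dvdn_leq // pdiv_dvd.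
  have m'lt : (m' < m1)%N := ltn_Pdiv (prime_gt1 pp) m10.
  have em : (m' * p = m1)%N by rewrite divnK // pdiv_dvd.
  set g' := g *+ m'.
  have ng' : ~ inspan s g' by move=> sg; apply: (mn _ m'lt); split => //; exact sg.
  have eg' : lc s c0 = g' *+ p by rewrite -mulrnA em.
  have [L HL] := span_fin TH t.
  have [h0 eh0] := DH (lc t c0) pp.
  have [z [zp zL]] := SH pp [seq u - h0 | u <- L].
  set h' := h0 + z.
  have eh' : lc t c0 = h' *+ p by rewrite mulrnDl zp addr0 eh0.
  have nh' : ~ inspan t h'.
    move=> /HL hL; move: zL; rewrite (_ : z = h' - h0); last by rewrite /h' addrAC subrr add0r.
    by move/negP; apply; apply: (map_f (fun u => u - h0) hL).
  have gd' : good (rcons s g') (rcons t h').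
    split; first by rewrite !size_rcons sz.
    move=> c; rewrite !lc_rcons -sz (key pp ng' eg') (key pp nh' eh').
    split; move=> [q [eq e]]; exists q; split => //; by apply/gd.
  have sg : inspan (rcons s g') (g *+ m').
    exists (fun j => (j == size s)%:Z); rewrite lc_delta ?size_rcons //.
    by rewrite nth_rcons ltnn eqxx.
  have [h gh] := IH m' (leq_trans m'lt m1m) _ _ g gd' m'0 sg.
  exists h; exact: good_drop gh.
-
  have eg : lc s c0 = g by rewrite e0 e1.
  exists (lc t c0); split; first by rewrite !size_rcons sz.
  move=> c; rewrite !lc_rcons -sz -eg -lcZ -lcD -lcZ -lcD; exact: gd.
Qed.

Lemma ext2 s t (g : G) : good s t -> exists h, good (rcons s g) (rcons t h).
Proof.
move=> gst; have [o [o0 go]] := TG g.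
apply: (ext2_aux gst o0); rewrite go; exact: inspan0.
Qed.
End Ext2.

Local Open Scope ring_scope.

Lemma prefix_nth (T : Type) (x0 : T) (f : nat -> seq T) :
  (forall n, exists u, f n.+1 = f n ++ u) ->
  forall n m i, (n <= m)%N -> (i < size (f n))%N -> nth x0 (f m) i = nth x0 (f n) i.
Proof.
move=> Hf n m i nm; elim: m nm => [|m IH]; first by rewrite leqn0 => /eqP->.
rewrite leq_eqVlt => /orP [/eqP-> //|]; rewrite ltnS => nm si.
have [u ->] := Hf m; rewrite nth_cat -IH //.
suff lt : (i < size (f m))%N by rewrite lt.
elim: m {IH} nm => [|m IH]; first by rewrite leqn0 => /eqP <-.
rewrite leq_eqVlt => /orP [/eqP <- //|]; rewrite ltnS => nm.
have [u' ->] := Hf m; rewrite size_cat; exact: leq_trans (IH nm) (leq_addr _ _).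
Qed.

Lemma lc_d3 (V : zmodType) (s : seq V) a b d : (a < size s)%N -> (b < size s)%N -> (d < size s)%N ->
  lc s (fun j => ((j == a)%:Z + (j == b)%:Z) + - (j == d)%:Z) = s`_a + s`_b - s`_d.
Proof. by move=> *; rewrite !lcD lcN !lc_delta. Qed.

Lemma lc_d2 (V : zmodType) (s : seq V) a d : (a < size s)%N -> (d < size s)%N ->
  lc s (fun j => (j == a)%:Z + - (j == d)%:Z) = s`_a - s`_d.
Proof. by move=> *; rewrite !lcD lcN !lc_delta. Qed.

Lemma good_sym (G H : zmodType) (s : seq G) (t : seq H) : good s t -> good t s.
Proof. by move=> [sz gd]; split => // c; split => /gd. Qed.

Section BF.
Variables G H : countZmodType.
Hypotheses (TG : Tor G) (TH : Tor H) (DG : DivP G) (DH : DivP H) (SG : Soc G) (SH : Soc H).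

Definition enG (n : nat) : G := odflt 0 (unpickle n).
Definition enH (n : nat) : H := odflt 0 (unpickle n).
Lemma enGK x : enG (pickle x) = x. Proof. by rewrite /enG pickleK. Qed.
Lemma enHK x : enH (pickle x) = x. Proof. by rewrite /enH pickleK. Qed.

Definition fwd (s : seq G) (t : seq H) (g : G) : H :=
  epsilon (inhabits 0) (fun h => good (rcons s g) (rcons t h)).
Definition bwd (s : seq G) (t : seq H) (h : H) : G :=
  epsilon (inhabits 0) (fun g => good (rcons s g) (rcons t h)).


Lemma fwd_good s t g : good s t -> good (rcons s g) (rcons t (fwd s t g)).
Proof. move=> gst; apply: (epsilon_spec (inhabits 0) (fun h => good (rcons s g) (rcons t h))); exact: ext2. Qed.
Lemma bwd_good s t h : good s t -> good (rcons s (bwd s t h)) (rcons t h).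
Proof.
move=> gst; apply: (epsilon_spec (inhabits 0) (fun g => good (rcons s g) (rcons t h))).
have [g gg] := ext2 TH TG DG SG h (good_sym gst); exists g; exact: good_sym.
Qed.

Fixpoint st (n : nat) : seq G * seq H :=
  match n with
  | 0 => ([::], [::])
  | n'.+1 => let: (s, t) := st n' in
             let g := enG n' in let s1 := rcons s g in let t1 := rcons t (fwd s t g) in
             let h2 := enH n' in (rcons s1 (bwd s1 t1 h2), rcons t1 h2)
  end.

Lemma st_good n : good (st n).1 (st n).2 /\ size (st n).1 = (2 * n)%N.
Proof.
elim: n => [|n [IH sz]] /=; first by split => //; split => // c; rewrite /lc !big_ord0.
case: (st n) IH sz => s t /= IH sz; split; last by rewrite !size_rcons sz mulnS.
exact/bwd_good/fwd_good.
Qed.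

Lemma st1_ext n : exists u, (st n.+1).1 = (st n).1 ++ u.
Proof. rewrite /=; case: (st n) => s t /=; eexists; by rewrite -!cats1 -catA. Qed.
Lemma st2_ext n : exists u, (st n.+1).2 = (st n).2 ++ u.
Proof. rewrite /=; case: (st n) => s t /=; eexists; by rewrite -!cats1 -catA. Qed.

Lemma st_sz2 n : size (st n).2 = (2 * n)%N.
Proof. have [[sz _] sz'] := st_good n; by rewrite -sz. Qed.

Lemma st_fwd n : (st n.+1).1`_(2 * n) = enG n.
Proof.
have := st_good n; rewrite /=; case: (st n) => s t /= [_ sz].
by rewrite nth_rcons size_rcons sz ltnSn nth_rcons sz ltnn eqxx.
Qed.
Lemma st_bwd n : (st n.+1).2`_(2 * n).+1 = enH n.
Proof.
have := st_sz2 n; rewrite /=; case: (st n) => s t /= sz.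
by rewrite nth_rcons size_rcons sz ltnn eqxx.
Qed.

Definition phi (x : G) : H := (st (pickle x).+1).2`_(2 * pickle x).

Lemma st_at N x : (pickle x < N)%N ->
  (st N).1`_(2 * pickle x) = x /\ (st N).2`_(2 * pickle x) = phi x /\ (2 * pickle x < size (st N).1)%N.
Proof.
move=> lt.
have hs : (2 * pickle x < size (st (pickle x).+1).1)%N by rewrite (st_good _).2 ltn_pmul2l.
have hs2 : (2 * pickle x < size (st (pickle x).+1).2)%N by rewrite st_sz2 ltn_pmul2l.
split; first by rewrite (prefix_nth 0 st1_ext lt hs) st_fwd enGK.
split; first by rewrite (prefix_nth 0 st2_ext lt hs2).
by rewrite (st_good _).2 ltn_pmul2l.
Qed.

Lemma phiD x y : phi (x + y) = phi x + phi y.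
Proof.
set N := (pickle x + pickle y + pickle (x + y)).+1.
have lx : (pickle x < N)%N by rewrite /N ltnS -addnA leq_addr.
have ly : (pickle y < N)%N by rewrite /N ltnS -addnA (addnC (pickle y)) addnA leq_addl.
have lz : (pickle (x + y)%R < N)%N by rewrite /N ltnS leq_addl.
have [ex [fx sx]] := st_at lx.
have [ey [fy sy]] := st_at ly.
have [ez [fz sz]] := st_at lz.
have [[sz12 gd] _] := st_good N.
have := lc_d3 sx sy sz; rewrite ex ey ez subrr => /gd.
rewrite lc_d3 -?sz12 // fx fy fz => /eqP; rewrite subr_eq0 => /eqP; done.
Qed.

Lemma phi_inj x y : phi x = phi y -> x = y.
Proof.
move=> e; set N := (pickle x + pickle y).+1.
have lx : (pickle x < N)%N by rewrite /N ltnS leq_addr.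
have ly : (pickle y < N)%N by rewrite /N ltnS leq_addl.
have [ex [fx sx]] := st_at lx.
have [ey [fy sy]] := st_at ly.
have [[sz12 gd] _] := st_good N.
have sx' : (2 * pickle x < size (st N).2)%N by rewrite -sz12.
have sy' : (2 * pickle y < size (st N).2)%N by rewrite -sz12.
have := lc_d2 sx' sy'; rewrite fx fy e subrr => /gd.
by rewrite lc_d2 // ex ey => /eqP; rewrite subr_eq0 => /eqP.
Qed.

Lemma phi_surj y : exists x, phi x = y.
Proof.
set n := pickle y.
set g := (st n.+1).1`_(2 * n).+1.
exists g; set N := (n + pickle g).+2.
have lg : (pickle g < N)%N by rewrite /N ltnS leqW // leq_addl.
have [eg [fg sg]] := st_at lg.
have [[sz12 gd] szN] := st_good N.
have hs : ((2 * n).+1 < size (st N).1)%N by rewrite szN /N; lia.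
have hs1 : ((2 * n).+1 < size (st n.+1).1)%N by rewrite (st_good _).2; lia.
have hs2 : ((2 * n).+1 < size (st n.+1).2)%N by rewrite st_sz2; lia.
have e1 : (st N).1`_(2 * n).+1 = g by rewrite (prefix_nth 0 st1_ext _ hs1) // /N; lia.
have e2 : (st N).2`_(2 * n).+1 = y by rewrite (prefix_nth 0 st2_ext _ hs2) ?st_bwd ?enHK // /N; lia.
have hs' : ((2 * n).+1 < size (st N).2)%N by rewrite -sz12.
have sg' : (2 * pickle g < size (st N).2)%N by rewrite -sz12.
have := lc_d2 hs sg; rewrite e1 eg subrr => /gd.
by rewrite lc_d2 // e2 fg => /eqP; rewrite subr_eq0 => /eqP.
Qed.
End BF.

Local Open Scope ring_scope.

Lemma lc_nil (V : zmodType) c : lc ([::] : seq V) c = 0.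
Proof. by rewrite /lc big_ord0. Qed.
Lemma lc_one (V : zmodType) (d : V) c : lc [:: d] c = d *~ c 0%N.
Proof. by rewrite /lc big_ord1. Qed.

Section CH.
Variables (G : countZmodType) (H : zmodType).
Hypotheses (DH : DivP H).
Variables (d : G) (e : H).
Hypothesis gde : good1 [:: d] [:: e].

Definition fwd1 (s : seq G) (t : seq H) (g : G) : H :=
  epsilon (inhabits 0) (fun h => good1 (rcons s g) (rcons t h)).

Fixpoint st1 (n : nat) : seq G * seq H :=
  match n with
  | 0 => ([:: d], [:: e])
  | n'.+1 => let: (s, t) := st1 n' in
             let g := enG G n' in (rcons s g, rcons t (fwd1 s t g))
  end.

Lemma st1_good n : good1 (st1 n).1 (st1 n).2 /\ size (st1 n).1 = n.+1.
Proof.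
elim: n => [|n [IH sz]] /=; first by split.
case: (st1 n) IH sz => s t /= IH sz; split; last by rewrite !size_rcons sz.
apply: (epsilon_spec (inhabits 0) (fun h => good1 (rcons s _) (rcons t h))); exact: ext1.
Qed.

Lemma st11_ext n : exists u, (st1 n.+1).1 = (st1 n).1 ++ u.
Proof. rewrite /=; case: (st1 n) => s t /=; eexists; by rewrite -!cats1. Qed.
Lemma st12_ext n : exists u, (st1 n.+1).2 = (st1 n).2 ++ u.
Proof. rewrite /=; case: (st1 n) => s t /=; eexists; by rewrite -!cats1. Qed.
Lemma st1_sz2 n : size (st1 n).2 = n.+1.
Proof. have [[sz _] sz'] := st1_good n; by rewrite -sz. Qed.
Lemma st1_fwd n : (st1 n.+1).1`_n.+1 = enG G n.
Proof.
have := st1_good n; rewrite /=; case: (st1 n) => s t /= [_ sz].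
by rewrite nth_rcons sz ltnn eqxx.
Qed.

Definition chi (x : G) : H := (st1 (pickle x).+1).2`_(pickle x).+1.

Lemma st1_at N x : (pickle x < N)%N ->
  (st1 N).1`_(pickle x).+1 = x /\ (st1 N).2`_(pickle x).+1 = chi x /\
  ((pickle x).+1 < size (st1 N).1)%N /\ ((pickle x).+1 < size (st1 N).2)%N.
Proof.
move=> lt.
have hs : ((pickle x).+1 < size (st1 (pickle x).+1).1)%N by rewrite (st1_good _).2.
have hs2 : ((pickle x).+1 < size (st1 (pickle x).+1).2)%N by rewrite st1_sz2.
split; first by rewrite (prefix_nth 0 st11_ext lt hs) st1_fwd enGK.
split; first by rewrite (prefix_nth 0 st12_ext lt hs2).
by rewrite (st1_good _).2 st1_sz2.
Qed.

Lemma chiD x y : chi (x + y) = chi x + chi y.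
Proof.
set N := (pickle x + pickle y + pickle (x + y)).+1.
have lx : (pickle x < N)%N by rewrite /N ltnS -addnA leq_addr.
have ly : (pickle y < N)%N by rewrite /N ltnS -addnA (addnC (pickle y)) addnA leq_addl.
have lz : (pickle (x + y)%R < N)%N by rewrite /N ltnS leq_addl.
have [ex [fx [sx sx']]] := st1_at lx.
have [ey [fy [sy sy']]] := st1_at ly.
have [ez [fz [sz sz']]] := st1_at lz.
have [[sz12 gd] _] := st1_good N.
have := lc_d3 sx sy sz; rewrite ex ey ez subrr => /gd.
rewrite lc_d3 // fx fy fz => /eqP; rewrite subr_eq0 => /eqP; done.
Qed.

Lemma chi_d : chi d = e.
Proof.
set N := (pickle d).+1.
have [ex [fx [sx sx']]] := @st1_at N d (ltnSn _).
have [[sz12 gd] _] := st1_good N.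
have h0 : (0 < size (st1 N).1)%N by rewrite (st1_good _).2.
have h0' : (0 < size (st1 N).2)%N by rewrite st1_sz2.
have n0 : forall k, (st1 k).1`_0 = d.
  move=> k; rewrite (prefix_nth 0 st11_ext (_ : 0 <= k)%N) //.
have n0' : forall k, (st1 k).2`_0 = e.
  move=> k; rewrite (prefix_nth 0 st12_ext (_ : 0 <= k)%N) //.
have := lc_d2 sx h0; rewrite ex n0 subrr => /gd.
by rewrite lc_d2 // fx n0' => /eqP; rewrite subr_eq0 => /eqP.
Qed.
End CH.

Local Open Scope ring_scope.

Lemma inspan_nil (V : zmodType) (x : V) : inspan [::] x -> x = 0.
Proof. by move=> [c <-]; rewrite lc_nil. Qed.

Lemma exists_e (G H : zmodType) (SH : Soc H) (d : G) : d != 0 ->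
  exists e : H, e != 0 /\ good1 [:: d] [:: e].
Proof.
move=> d0.
case: (classic (exists m, (0 < m)%N /\ inspan [::] (d *+ m))) => [ex|nex].
- have [o [[o0 so] mn]] := min_ex ex.
  have dz : d *+ o = 0 := inspan_nil so.
  have o1 : (1 < o)%N.
    case: (ltngtP o 1) => // [|e1]; first by rewrite ltnS leqn0 => /eqP e1; move: o0; rewrite e1.
    by move: dz d0; rewrite e1 mulr1n => ->; rewrite eqxx.
  have pp := pdiv_prime o1.
  have [e [ep e0]] := SH _ pp [:: 0].
  exists e; split; first by move: e0; rewrite inE.
  split => // c; rewrite !lc_one => dc.
  have sj : inspan [::] (d *~ c 0%N) by exists (fun _ => 0); rewrite lc_nil dc.
  have := min_div (c0 := fun _ => 0) o0 (_ : lc [::] _ = _) mn sj.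
  move=> /(_ (etrans (lc_nil _ _) (esym dz))) ->.
  rewrite -mulrzA_C; change (e *~ o) with (e *+ o).
  by rewrite -(divnK (pdiv_dvd o)) mulnC mulrnA ep mul0rn mul0rz.
- have [e [ep e0]] := SH 2 isT [:: 0].
  exists e; split; first by move: e0; rewrite inE.
  split => // c; rewrite !lc_one => dc.
  have sj : inspan [::] (d *~ c 0%N) by exists (fun _ => 0); rewrite lc_nil dc.
  have := inspan_abs sj; case: (posnP `|c 0%N|%N) => [e'|pos] srr.
    by move/eqP: e'; rewrite absz_eq0 => /eqP->; rewrite mulr0z.
  by case: nex; exists `|c 0%N|%N.
Qed.

Definition pr (H : countZmodType) := (H * H)%type.
HB.instance Definition _ H := GRing.Zmodule.copy (pr H) (H * H)%type.
HB.instance Definition _ H := Countable.copy (pr H) (H * H)%type.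

Section PR.
Variable H : countZmodType.
Hypotheses (TH : Tor H) (DH : DivP H) (SH : Soc H).

Lemma pr_muln (a b : H) n : ((a, b) : pr H) *+ n = ((a *+ n, b *+ n) : pr H).
Proof. elim: n => [|n IH] //; by rewrite !mulrS IH. Qed.

Lemma pr_Tor : Tor (pr H).
Proof.
move=> [a b]; have [m1 [m10 e1]] := TH a; have [m2 [m20 e2]] := TH b.
exists (m1 * m2)%N; split; first by rewrite muln_gt0 m10.
by rewrite pr_muln mulrnA e1 mul0rn mulnC mulrnA e2 mul0rn.
Qed.

Lemma pr_DivP : DivP (pr H).
Proof.
move=> [a b] p pp; have [a' e1] := DH a pp; have [b' e2] := DH b pp.
by exists (a', b'); rewrite pr_muln e1 e2.
Qed.

Lemma pr_Soc : Soc (pr H).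
Proof.
move=> p pp s; have [z [zp zs]] := SH pp [seq u.1 | u <- s].
exists (z, 0); rewrite pr_muln zp mul0rn; split => //.
apply/negP => /(map_f (fun u : pr H => u.1)) /=; by apply/negP.
Qed.
End PR.

Section PE.
Variables (G H : countZmodType).
Hypotheses (TH : Tor H) (DH : DivP H) (SH : Soc H).

Lemma PE (D : seq G) : exists psi : G -> H,
  (forall x y, psi (x + y) = psi x + psi y) /\ forall d, d \in D -> d != 0 -> psi d != 0.
Proof.
elim: D => [|d D [psi [psiD psiN]]].
  exists (fun _ => 0); split => // x y; by rewrite addr0.
case: (eqVneq d 0) => [->|d0].
  exists psi; split => // d'; rewrite inE => /orP [/eqP->|]; [by rewrite eqxx | exact: psiN].
have [e [e0 gde]] := exists_e SH d0.
set iota := @phi (pr H) H.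
have iD : forall u v, iota (u + v) = iota u + iota v := phiD (pr_Tor TH) TH (pr_DivP DH) DH (pr_Soc SH) SH.
have iI : forall u v, iota u = iota v -> u = v := phi_inj (pr_Tor TH) TH (pr_DivP DH) DH (pr_Soc SH) SH.
have i0 : iota 0 = 0 by apply/eqP; rewrite -(addrI (iota 0) (_ : iota 0 + iota 0 = iota 0 + 0)) // addr0 -iD addr0.
set ch := chi d e.
exists (fun x => iota ((psi x, ch x) : pr H)); split.
  by move=> x y; rewrite -iD psiD /ch (chiD DH gde).
move=> d'; rewrite inE => /orP [/eqP->|dD] nz; apply/negP; rewrite -i0 => /eqP /iI.
  move/(congr1 snd) => /=; by rewrite /ch (chi_d DH gde) => /eqP; rewrite (negPf e0).
move/(congr1 fst) => /= /eqP; apply/negP; exact: psiN.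
Qed.
End PE.

Local Open Scope ring_scope.

Definition Props (V : zmodType) := Tor V /\ DivP V /\ Soc V.

Section Transfer.
Variables (V W : zmodType) (f : W -> V) (g : V -> W).
Hypotheses (fK : cancel f g) (gK : cancel g f) (fD : forall x y, f (x + y) = f x + f y).
Lemma f0 : f 0 = 0.
Proof. by apply: (addrI (f 0)); rewrite -fD !addr0. Qed.
Lemma fn x m : f (x *+ m) = f x *+ m.
Proof. elim: m => [|m IH]; by rewrite ?f0 // !mulrS fD IH. Qed.
Lemma transfer : Props V -> Props W.
Proof.
move=> [T [D S]]; split; [|split].
- move=> x; have [m [m0 e]] := T (f x); exists m; split => //.
  by rewrite -(fK (x *+ m)) fn e -f0 fK.
- move=> x p pp; have [y e] := D (f x) p pp; exists (g y).
  by rewrite -(fK (_ *+ _)) fn gK e fK.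
- move=> p pp s; have [z [zp zs]] := S p pp [seq f u | u <- s]; exists (g z); split.
    by rewrite -(fK (_ *+ _)) fn gK zp -f0 fK.
  apply/negP => /(map_f f); rewrite gK; by apply/negP.
Qed.
End Transfer.

Lemma addf_neg (V W : zmodType) (f : W -> V) (fD : forall x y, f (x + y) = f x + f y) x y :
  f (x - y) = f x - f y.
Proof.
have f0 : f 0 = 0 by apply: (addrI (f 0)); rewrite -fD !addr0.
apply/eqP; rewrite eq_sym subr_eq -fD addrNK //.
Qed.

Record abt := Abt { tb : table; tb_ok : abelian_tables tb }.
Definition car (G : abt) : Type := nat.
HB.instance Definition _ G := Countable.copy (car G) nat.

Section Z.
Variable G : abt.
Lemma inv_ex (x : nat) : exists y, tb G x y == 0%N.
Proof. case: (tb_ok G) => [[_ [_ H]] _]. by case: (H x) => y [/eqP ? _]; exists y. Qed.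
Definition topp (x : car G) : car G := xchoose (inv_ex x).
Definition tadd (x y : car G) : car G := tb G x y.
Lemma taddA : associative tadd. Proof. by move=> x y z; case: (tb_ok G) => [[H _] _]; rewrite /tadd H. Qed.
Lemma taddC : commutative tadd. Proof. by move=> x y; case: (tb_ok G) => _ H; apply H. Qed.
Lemma tadd0 : left_id (0%N : car G) tadd. Proof. by move=> x; case: (tb_ok G) => [[_ [H _]] _]; case: (H x). Qed.
Lemma taddN : left_inverse (0%N : car G) topp tadd.
Proof. move=> x; rewrite taddC /tadd /topp; exact/eqP/(xchooseP (inv_ex x)). Qed.
End Z.
HB.instance Definition _ G := GRing.isZmodule.Build (car G) (@taddA G) (@taddC G) (@tadd0 G) (@taddN G).

Fixpoint pw (M : table) (m x : nat) : nat :=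
  match m with 0 => 0%N | m'.+1 => M x (pw M m' x) end.

Lemma pwE (G : abt) m (x : car G) : x *+ m = pw (tb G) m x.
Proof. elim: m => [|m IH] //; by rewrite mulrS IH. Qed.

Lemma add_tb (G : abt) (x y : car G) : x + y = tb G x y. Proof. by []. Qed.
Lemma zero_tb (G : abt) : (0 : car G) = 0%N. Proof. by []. Qed.

Local Close Scope ring_scope.

Definition C_tor (x : nat) (M : table) := exists m, (0 < m)%N /\ pw M m x = 0%N.
Definition C_div (x p : nat) (M : table) := prime p -> exists y, pw M p y = x.
Definition C_soc (p k : nat) (M : table) := prime p ->
  exists s : seq nat, uniq s /\ size s = k /\ forall z, z \in s -> pw M p z = 0%N.
Definition cond (t a b : nat) (M : table) :=
  if t == 0%N then C_tor a M else if t == 1%N then C_div a b M else C_soc a b M.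

Definition Uk (k : nat) (M : table) : Prop := abelian_tables M /\
  match unpickle k with Some (t, (a, b)) => cond t a b M | None => True end.

Lemma conds_props (G : abt) : (forall t a b, cond t a b (tb G)) -> Props (car G).
Proof.
move=> C; split; [|split].
- move=> x; have := C 0%N x 0%N; rewrite /cond /= => -[m [m0 e]]; exists m; by rewrite pwE e.
- move=> x p pp; have := C 1%N x p; rewrite /cond /= => /(_ pp) [y e]; exists y; by rewrite pwE.
- move=> p pp s; have := C 2%N p (size s).+1; rewrite /cond /= => /(_ pp) [s' [us [sz e]]].
  case: (classic (exists z, z \in s' /\ z \notin s)) => [[z [zs' zs]]|nex].
    by exists z; rewrite pwE e.
  have : {subset s' <= s}.
    move=> z zs'; apply/negPn/negP => zs; apply: nex; by exists z.
  by move/(uniq_leq_size us); rewrite sz ltnn.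
Qed.

Lemma props_conds (G : abt) : Props (car G) -> forall t a b, cond t a b (tb G).
Proof.
move=> [T [D S]] t a b; rewrite /cond.
case: eqP => _.
  have [m [m0 e]] := T (a : car G); exists m; by rewrite -pwE e.
case: eqP => _.
  move=> pp; have [y e] := D (a : car G) b pp; exists y; by rewrite -pwE e.
move=> pp; elim: b => [|k [s [us [sz e]]]]; first by exists [::].
have [z [zp zs]] := S a pp (s : seq (car G)).
exists (z :: s); split; first by rewrite /= zs us.
split; first by rewrite /= sz.
move=> w; rewrite inE => /orP [/eqP->|]; [by rewrite -pwE zp | exact: e].
Qed.

Lemma all_Uk M : (forall k, Uk k M) -> forall t a b, cond t a b M.
Proof. move=> H t a b; have [_] := H (pickle (t, (a, b))); by rewrite pickleK. Qed.

Definition bnd (M : table) m x := (x + \sum_(j < m) pw M j x)%N.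

Lemma pw_agree n M M' m x : agree n M M' -> (bnd M m x < n)%N -> pw M' m x = pw M m x.
Proof.
move=> ag; elim: m => [|m IH] // lt /=.
have lt' : (bnd M m x < n)%N.
  apply: leq_ltn_trans lt; rewrite /bnd leq_add2l big_ord_recr /= leq_addr //.
rewrite IH // ag //.
  apply: leq_ltn_trans lt; exact: leq_addr.
apply: leq_ltn_trans lt; rewrite /bnd big_ord_recr /= addnA leq_addl //.
Qed.

Lemma bnd_x M m x : (x <= bnd M m x)%N. Proof. exact: leq_addr. Qed.

Lemma cond_open t a b M : cond t a b M -> exists n, forall M', agree n M M' -> cond t a b M'.
Proof.
rewrite /cond; case: eqP => [_|_].
  move=> [m [m0 e]]; exists (bnd M m a).+1 => M' ag; exists m; split => //.
  by rewrite (pw_agree ag).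
case: eqP => [_|_].
  case: (boolP (prime b)) => pb C; last by exists 0%N => M' _ pb'; rewrite pb' in pb.
  have [y e] := C pb; exists (bnd M b y).+1 => M' ag _; exists y; by rewrite (pw_agree ag).
case: (boolP (prime a)) => pa C; last by exists 0%N => M' _ pa'; rewrite pa' in pa.
have [s [us [sz e]]] := C pa.
exists (\sum_(z <- s) bnd M a z).+1 => M' ag _; exists s; split => //; split => // z zs.
rewrite (pw_agree ag) ?e //.
by rewrite ltnS (bigD1_seq z) //= leq_addr.
Qed.

Lemma Uk_open k : openIn abelian_tables (Uk k).
Proof.
split; first by move=> M [].
move=> M; rewrite /Uk; case: (unpickle k) => [[t [a b]]|] [ab C]; last by exists 0%N => M' ab' _; split.
have [n Hn] := cond_open C; exists n => M' ab' ag; split => //; exact: Hn.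
Qed.

Definition swp (a b t : nat) : nat := if t == a then b else if t == b then a else t.
Lemma swpK a b : involutive (swp a b).
Proof.
move=> t; rewrite /swp; case: (eqVneq t a) => [->|ta].
  rewrite eqxx; case: eqVneq => // ->; done.
case: (eqVneq t b) => [->|tb]; first by rewrite eqxx.
by rewrite (negPf ta) (negPf tb).
Qed.

Lemma ext_perm (F : seq nat) (f : nat -> nat) : uniq F -> {in F &, injective f} ->
  exists pi pii : nat -> nat, cancel pi pii /\ cancel pii pi /\ forall x, x \in F -> pi x = f x.
Proof.
elim: F => [|x F IH] /=.
  move=> _ _; exists id, id; by split.
move=> /andP [xF uF] inj.
have inj' : {in F &, injective f} by move=> u v uF' vF' e; apply: inj => //; rewrite inE ?uF' ?vF' orbT.
have [pi [pii [c1 [c2 e]]]] := IH uF inj'.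
exists (swp (pi x) (f x) \o pi), (pii \o swp (pi x) (f x)); split; [|split].
- by move=> t /=; rewrite swpK c1.
- by move=> t /=; rewrite c2 swpK.
move=> z; rewrite inE => /orP [/eqP->|zF] /=; first by rewrite /swp eqxx.
rewrite (e z zF) /swp.
have zx : z != x by apply: contraNneq xF => <-.
have -> : (f z == pi x) = false.
  apply/negbTE; apply: contra zx => /eqP ez; rewrite -e // in ez; apply/eqP; exact: (can_inj c1).
have -> : (f z == f x) = false.
  apply/negbTE; apply: contra zx => /eqP ez; apply/eqP; apply: inj => //; by rewrite inE ?zF ?eqxx ?orbT.
done.
Qed.

Local Open Scope ring_scope.
Lemma approx (GA : abt) : Props (car GA) -> forall M n, abelian_tables M ->
  exists M', abelian_tables M' /\ (forall t a b, cond t a b M') /\ agree n M M'.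
Proof.
move=> [TA [DA SA]] M n abM.
set GM := Abt abM.
have [[Aa [Ai Ainv]] Ac] := tb_ok GA.
set F := undup (0%N :: iota 0 n ++ [seq M a b | a <- iota 0 n, b <- iota 0 n]).
set D := [seq ((a : car GM) - (b : car GM)) | a <- F, b <- F].
have [psi [psiD psiN]] := PE TA DA SA D.
have psi0 : psi 0 = 0 by apply: (addrI (psi 0)); rewrite -psiD !addr0.
have inj : {in F &, injective psi}.
  move=> a b aF bF e; apply/eqP/negPn/negP => ab.
  have := psiN ((a : car GM) - (b : car GM)) (allpairs_f (fun a b => (a : car GM) - (b : car GM)) aF bF).
  rewrite subr_eq0 => /(_ ab); by rewrite (addf_neg psiD) e subrr eqxx.
have [pi [pii [c1 [c2 epi]]]] := ext_perm (undup_uniq _) inj.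
have F0 : 0%N \in F by rewrite mem_undup inE eqxx.
have pi0 : pi 0%N = 0%N by rewrite epi // psi0.
set M' : table := fun x y => pii (tb GA (pi x) (pi y)).
have abM' : abelian_tables M'.
  split; [split; [|split]|].
  - by move=> x y z; rewrite /M' !c2 Aa.
  - move=> x; rewrite /M' pi0; have [-> ->] := Ai (pi x); by rewrite !c1.
  - move=> x; have [w [e1 e2]] := Ainv (pi x); exists (pii w).
    by rewrite /M' c2 e1 e2 -pi0 c1.
  - by move=> x y; rewrite /M' Ac.
exists M'; split => //; split.
  set GM' := Abt abM'.
  apply: (props_conds (G := GM')).
  apply: (@transfer (car GA) (car GM') pi pii c1 c2) => //.
  by move=> x y; rewrite add_tb /= /M' c2.
move=> x y xn yn.
have xF : x \in F by rewrite mem_undup inE mem_cat mem_iota xn orbT.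
have yF : y \in F by rewrite mem_undup inE mem_cat mem_iota yn orbT.
have mF : M x y \in F.
  rewrite mem_undup inE mem_cat; apply/orP; right; apply/orP; right.
  by apply: (allpairs_f M); rewrite mem_iota.
rewrite /M' (epi x xF) (epi y yF).
have -> : tb GA (psi x) (psi y) = psi (M x y) by rewrite (psiD (x : car GM) y).
by rewrite -(epi _ mF) c1.
Qed.

Lemma main_abstract (A : table) (abA : abelian_tables A) :
  Props (car (Abt abA)) ->
  comeagerIn abelian_tables (fun G => is_group_table G /\ iso_tables G A).
Proof.
move=> PA; exists Uk; split.
  move=> k; split; first exact: Uk_open.
  move=> M n abM; have [M' [ab' [C ag]]] := approx PA n abM; exists M'; split => //; split => //.
  rewrite /Uk; split => //; case: (unpickle k) => [[t [a b]]|] //.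
move=> M abM HU; split; first by case: abM.
set GM := Abt abM; set GA := Abt abA.
have [TM [DM SM]] : Props (car GM) by apply: conds_props; exact: all_Uk.
have [TA [DA SA]] := PA.
set f := @phi (car GM) (car GA).
have fD := phiD TM TA DM DA SM SA.
have fI := phi_inj TM TA DM DA SM SA.
have fS := phi_surj TM TA DM DA SM SA.
have ex : forall y : nat, exists x : nat, f x == y by move=> y; have [x e] := fS y; exists x; apply/eqP.
exists f; split.
  exists (fun y => xchoose (ex y)).
    by move=> x; apply: fI; exact/eqP/(xchooseP (ex (f x))).
  by move=> y; exact/eqP/(xchooseP (ex y)).
by move=> x y; exact: (fD x y).
Qed.

Local Open Scope ring_scope.

Definition frac (x : rat) : rat := x - (Num.floor x)%:~R.
Definition isZ (x : rat) := exists z : int, x = z%:~R.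

Lemma frac_itv x : 0 <= frac x < 1.
Proof.
have /andP [h1 h2] := floor_itv x.
by rewrite /frac subr_ge0 h1 /= ltrBlDl -[1]/(1%:~R) -intrD.
Qed.
Lemma frac_ge0 x : 0 <= frac x. Proof. by case/andP: (frac_itv x). Qed.
Lemma frac_lt1 x : frac x < 1. Proof. by case/andP: (frac_itv x). Qed.

Lemma frac_id x : 0 <= x < 1 -> frac x = x.
Proof. move=> h; rewrite /frac (floor_def (m := 0)) ?subr0 //. Qed.

Lemma frac_addZ x z : frac (x + z%:~R) = frac x.
Proof.
rewrite /frac floorDrz ?intr_int // intrKfloor intrD opprD addrACA subrr addr0 //.
Qed.

Lemma frac_eq x y : isZ (x - y) -> frac x = frac y.
Proof. move=> [z e]; have -> : x = y + z%:~R by rewrite -e addrC subrK. exact: frac_addZ. Qed.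

Lemma isZ_frac x : isZ (x - frac x).
Proof. exists (Num.floor x); by rewrite /frac opprB addrC subrK. Qed.

Lemma frac0 : frac 0 = 0. Proof. by rewrite frac_id // lexx ltr01. Qed.

Lemma frac_isZ x : isZ x -> frac x = 0.
Proof. move=> [z ->]; by rewrite -(add0r z%:~R) frac_addZ frac0. Qed.

Lemma isZD x y : isZ x -> isZ y -> isZ (x + y).
Proof. by move=> [a ->] [b ->]; exists (a + b); rewrite intrD. Qed.
Lemma isZN x : isZ x -> isZ (- x).
Proof. by move=> [a ->]; exists (- a); rewrite intrN. Qed.
Lemma isZM x y : isZ x -> isZ y -> isZ (x * y).
Proof. by move=> [a ->] [b ->]; exists (a * b); rewrite intrM. Qed.
Lemma isZ_int (z : int) : isZ z%:~R. Proof. by exists z. Qed.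
Lemma isZ_nat (n : nat) : isZ n%:R. Proof. by exists n%:Z. Qed.

Lemma add_mod1_frac a b : 0 <= a < 1 -> 0 <= b < 1 -> add_mod1 a b = frac (a + b).
Proof.
move=> /andP [a0 a1] /andP [b0 b1]; rewrite /add_mod1.
case: ifP => h.
  rewrite -[in RHS](subrK 1 (a + b)) (_ : 1 = 1%:~R) // frac_addZ frac_id //.
  by rewrite subr_ge0 h /= ltrBlDr; apply: ltrD.
rewrite frac_id //; rewrite addr_ge0 //=; by rewrite ltNge h.
Qed.

Lemma frac_mulZ x y : isZ y -> frac (y * frac x) = frac (y * x).
Proof.
move=> zy; apply: frac_eq; rewrite -mulrBr; apply: isZM => //.
by rewrite -opprB; apply: isZN; exact: isZ_frac.
Qed.

Lemma numq_isZ x n : (denq x %| n)%Z -> isZ (x * n%:~R).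
Proof.
move=> /dvdzP [k ->]; exists (k * numq x).
by rewrite !intrM numqE mulrCA.
Qed.

Lemma den_pow p x : prime p -> (exists k, isZ (x * (p ^ k)%:R)) -> exists k, denq x = (p ^ k)%:Z.
Proof.
move=> pp [k [z e]].
have e2 : (numq x * (p ^ k)%:Z = z * denq x)%R.
  apply: (@intr_inj rat); rewrite !intrM numqE -mulrA (mulrC (denq x)%:~R) mulrA.
  by rewrite -pmulrn /= e.
have dv : (`|denq x| %| `|numq x| * p ^ k)%N.
  apply/dvdnP; exists `|z|%N; by rewrite -abszM -e2 abszM absz_nat.
rewrite Gauss_dvdr in dv; last by rewrite coprime_sym coprime_num_den.
move: dv => /(dvdn_pfactor _ _ pp) [m _ em].
exists m; rewrite -em gtz0_abs //; exact: denq_gt0.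
Qed.

Lemma pow_den p x : (exists k, denq x = (p ^ k)%:Z) -> exists k, isZ (x * (p ^ k)%:R).
Proof. move=> [k e]; exists k; exists (numq x); by rewrite numqE e. Qed.

From mathcomp Require Import cyclic.
From mathcomp Require Import lra ring.
Local Open Scope ring_scope.

Section Pru.
Variable A : table.
Hypothesis gA : is_group_table A.
Variable f : nat -> (nat -> nat -> rat).
Hypotheses (finj : forall x y, f x = f y -> x = y)
  (fimg : forall h, prufer_sum_elt h <-> exists x, f x = h)
  (fadd : forall x y, f (A x y) = prufer_sum_add (f x) (f y)).

Lemma elt_f x : prufer_sum_elt (f x).
Proof. apply/fimg; by exists x. Qed.

Lemma f_itv x p i : 0 <= f x p i < 1.
Proof. by have [H _] := elt_f x. Qed.

Lemma abA : abelian_tables A.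
Proof.
split => // x y; apply: finj; rewrite !fadd /prufer_sum_add.
apply: functional_extensionality => p; apply: functional_extensionality => i.
by rewrite /add_mod1 addrC.
Qed.

Let GA := Abt abA.

Lemma f_eq (x y : nat) : (forall p i, f x p i = f y p i) -> x = y.
Proof.
move=> H; apply: finj; apply: functional_extensionality => p; apply: functional_extensionality => i.
exact: H.
Qed.

Lemma f_zero p i : f 0%N p i = 0.
Proof.
have [_ [Hid _]] := gA.
have := fadd 0%N 0%N; rewrite (Hid 0%N).1 => /(congr1 (fun h => h p i)).
rewrite /prufer_sum_add /add_mod1.
have /andP [a0 a1] := f_itv 0%N p i.
case: ifP => _ e; lra.
Qed.

Lemma f_muln (x : car GA) m p i : f (x *+ m) p i = frac (m%:R * f x p i).
Proof.
elim: m => [|m IH]; first by rewrite mulr0n f_zero mul0r frac0.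
rewrite mulrS add_tb fadd /prufer_sum_add IH add_mod1_frac ?f_itv ?frac_itv //.
apply: frac_eq.
have -> : f x p i + frac (m%:R * f x p i) - m.+1%:R * f x p i = - (m%:R * f x p i - frac (m%:R * f x p i)).
  rewrite mulrSr mulrDl mul1r; ring.
apply: isZN; exact: isZ_frac.
Qed.

Lemma A_Tor : Tor (car GA).
Proof.
move=> x; have [_ [_ [_ [N HN]]]] := elt_f x.
set m := (\prod_(j < N) \prod_(i < N) `|denq (f x j i)|)%N.
have m0 : (0 < m)%N.
  rewrite prodn_gt0 // => j; rewrite prodn_gt0 // => i; rewrite absz_gt0; exact: denq_neq0.
exists m; split => //; apply: f_eq => p i; rewrite f_muln f_zero.
case: (ltnP p N) => pN; last by rewrite (HN p i (or_introl pN)) mulr0 frac0.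
case: (ltnP i N) => iN; last by rewrite (HN p i (or_intror iN)) mulr0 frac0.
apply: frac_isZ; rewrite mulrC pmulrn; apply: numq_isZ.
rewrite dvdzE absz_nat /m (bigD1 (Ordinal pN)) //= dvdn_mulr //.
by rewrite (bigD1 (Ordinal iN)) //= dvdn_mulr.
Qed.

Lemma supp_bound (s : seq nat) : exists N, forall z, z \in s -> forall q i, (N <= i)%N -> f z q i = 0.
Proof.
elim: s => [|z s [N HN]]; first by exists 0%N.
have [_ [_ [_ [N' HN']]]] := elt_f z.
exists (maxn N N') => w; rewrite inE => /orP [/eqP->|ws] q i lt.
  by apply: HN'; right; apply: leq_trans lt; exact: leq_maxr.
by apply: HN => //; apply: leq_trans lt; exact: leq_maxl.
Qed.

Lemma A_Soc : Soc (car GA).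
Proof.
move=> p pp s.
have [N HN] := supp_bound s.
have p0 : (p%:R : rat) != 0 by rewrite pnatr_eq0 -lt0n prime_gt0.
set e := fun q j => if (q == p) && (j == N) then (p%:R : rat)^-1 else 0.
have ee : prufer_sum_elt e.
  split; [|split; [|split]].
  - move=> q j; rewrite /e; case: ifP => _; last by rewrite lexx ltr01.
    rewrite invr_ge0 ler0n /= invf_lt1 ?ltr0n ?prime_gt0 // ltr1n prime_gt1 //.
  - move=> q j nq; rewrite /e; case: eqP => // eq; by rewrite eq pp in nq.
  - move=> q j pq; apply: den_pow => //; exists 1%N; rewrite /e.
    case: ifP => [/andP [/eqP -> _]|_]; last by rewrite mul0r; exists 0.
    by rewrite expn1 mulVf //; exists 1.
  - exists (maxn p N).+1 => q j H; rewrite /e.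
    case: ifP => // /andP [/eqP eq /eqP ej]; exfalso; move: H.
    by rewrite eq ej !ltnNge leq_maxl leq_maxr; case.
have [x ex] := (fimg e).1 ee.
exists x; split.
  apply: f_eq => q j; rewrite f_muln f_zero ex /e.
  case: ifP => _; last by rewrite mulr0 frac0.
  by rewrite mulfV // -(add0r 1) (_ : 1 = 1%:~R) // frac_addZ frac0.
apply/negP => xs; have := HN x xs p N (leqnn _); rewrite ex /e !eqxx /=.
by move/eqP; rewrite invr_eq0 (negPf p0).
Qed.

Lemma isZ_fracM c P : isZ (c * P) -> isZ P -> isZ (frac c * P).
Proof.
move=> h1 h2; have -> : frac c * P = c * P - (c - frac c) * P by ring.
apply: isZD => //; apply: isZN; apply: isZM => //; exact: isZ_frac.
Qed.

Lemma A_DivP : DivP (car GA).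
Proof.
move=> x q pq.
have [hi [hn [hd [N hN]]]] := elt_f x.
set h := f x in hi hn hd hN *.
have q0 : (q%:R : rat) != 0 by rewrite pnatr_eq0 -lt0n prime_gt0.
set u := fun p i => (q ^ (totient `|denq (h p i)| - 1))%N.
set h' := fun p i => if p == q then frac (h p i / q%:R) else frac ((u p i)%:R * h p i).
have cop : forall p i, p != q -> coprime q `|denq (h p i)|.
  move=> p i pq'; case: (boolP (prime p)) => pp.
    have [k ->] := hd p i pp; rewrite absz_nat; apply: coprimeXr.
    by rewrite prime_coprime // dvdn_prime2 // eq_sym.
  by rewrite hn // (_ : denq 0 = 1) // coprimen1.
have ee : prufer_sum_elt h'.
  split; [|split; [|split]].
  - move=> p i; rewrite /h'; case: ifP => _; exact: frac_itv.
  - move=> p i np; rewrite /h'; case: eqP => [e|_]; first by rewrite e pq in np.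
    by rewrite hn // mulr0 frac0.
  - move=> p i pp; apply: den_pow => //.
    have [k ek] := hd p i pp; have [k' zk] := pow_den (ex_intro _ k ek).
    rewrite /h'; case: eqP => [e|_].
      exists k'.+1; apply: isZ_fracM; last exact: isZ_nat.
      have -> : h p i / q%:R * (p ^ k'.+1)%:R = h p i * (p ^ k')%:R.
        by rewrite e expnSr natrM; field.
      exact: zk.
    exists k'; apply: isZ_fracM; last exact: isZ_nat.
    by rewrite -mulrA; apply: isZM => //; exact: isZ_nat.
  - exists N => p i H; rewrite /h' (hN p i H) mul0r mulr0; case: ifP => _; exact: frac0.
have [y ey] := (fimg h').1 ee.
exists y; apply: f_eq => p i; rewrite f_muln ey /h'.
have hpi := hi p i.
case: eqP => [e|ne].
  by rewrite frac_mulZ; [rewrite mulrC divfK // frac_id | exact: isZ_nat].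
rewrite frac_mulZ; last exact: isZ_nat.
have dpos : (0 < `|denq (h p i)|)%N by rewrite absz_gt0 denq_neq0.
have uq : (u p i * q = q ^ totient `|denq (h p i)|)%N.
  by rewrite /u -expnSr subn1 prednK // totient_gt0.
have uq1 : (1 <= u p i * q)%N by rewrite uq expn_gt0 prime_gt0.
have dv : (`|denq (h p i)| %| u p i * q - 1)%N.
  rewrite -eqn_mod_dvd // uq; apply/eqP; apply: Euler_exp_totient.
  by apply: cop; apply/eqP.
rewrite -[RHS]frac_id //; apply: frac_eq.
have -> : q%:R * ((u p i)%:R * h p i) - h p i = h p i * ((u p i * q - 1)%N%:Z)%:~R.
  rewrite -pmulrn natrB // natrM; ring.
by apply: numq_isZ; rewrite dvdzE absz_nat.
Qed.

Lemma A_props : Props (car GA).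
Proof. split; [exact: A_Tor | split; [exact: A_DivP | exact: A_Soc]]. Qed.
End Pru.


Theorem corollary8p7 (A : table) :
  is_group_table A -> iso_to_prufer_sum A ->
  comeagerIn abelian_tables (fun G => is_group_table G /\ iso_tables G A).
Proof.
move=> gA [f [finj [fimg fadd]]].
exact: main_abstract (A_props gA finj fimg fadd).
Qed.
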